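(* In any execution of the algorithm described in the context, all non-faulty processes that decide decide the same value; i.e., no two non-faulty processes decide different values.
   Context: Model. There are $n$ processes $p_1,\dots,p_n$ ($i$ is the index of $p_i$) communicating over an asynchronous, reliable, point-to-point network: every pair of processes is connected by a channel, message delays are finite but unbounded, and the network does not lose, duplicate, modify or create messages. ''Broadcast'' means sending the message to every process (including oneself). Messages are signed with unforgeable digital signatures ($\langle m\rangle_j$ denotes message $m$ signed by $p_j$); malformed messages or messages with invalid signatures are ignored. Up to $t$ processes are Byzantine (faulty) and may behave arbitrarily and collude, but cannot forge signatures of other processes; the remaining processes are non-faulty and follow the algorithm. It is assumed that $t<n/3$. Algorithm. Messages are of the form $\mathrm{AUX}[r](v)$ with round $r\in\mathbb{N}$ and $v\in\{0,1\}$, sent as a pair $(\langle \mathrm{AUX}[r](v)\rangle_j,\mathit{proofs})$ where $\mathit{proofs}$ is a set of signed AUX messages. The predicate $\mathsf{is\_valid}(r,est,\mathit{proofs})$ is: if $r=0$ return true; if $r=1$ return true iff $\mathit{proofs}$ contains signed $\mathrm{AUX}[0](est)$ messages from $t+1$ different processes; otherwise let $b=(r-1)\bmod 2$; if $est=b$, return true iff ($r=2$ and $\mathit{proofs}$ contains signed $\mathrm{AUX}[0](b)$ from $t+1$ different processes) or ($\mathit{proofs}$ contains signed $\mathrm{AUX}[r-2](b)$ from $n-t$ different processes); if $est\neq b$, return true iff $\mathit{proofs}$ contains signed $\mathrm{AUX}[r-1](\neg b)$ from $n-t$ different processes. Each process $p_i$ with proposal $v_i$ keeps a round counter $r_i$,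 a set $\mathit{aux\_values}_i$ of signed AUX messages, and timers indexed by naturals (timers $2r$ and $2r+1$ belong to round $r$; starting an already started or expired timer does nothing). It sets $r_i:=0$, $\mathit{aux\_values}_i:=\emptyset$, broadcasts $(\langle\mathrm{AUX}[0](v_i)\rangle_i,\emptyset)$, then repeats forever: (1) $r_i:=r_i+1$; (2) if $i=r_i\bmod n$ (coordinator), run Broadcast; (3) start timer $2r_i$ and wait until it expires; (4) if $i\ne r_i\bmod n$, run Broadcast; (5) wait until $\mathit{aux\_values}_i$ contains round-$r_i$ AUX messages from $n-t$ different processes; (6) start timer $2r_i+1$ and wait until it expires; (7) with $b_i=r_i\bmod 2$, if $\mathit{aux\_values}_i$ contains $\mathrm{AUX}[r_i](b_i)$ from $n-t$ different processes, decide $b_i$ (if not yet decided); a process decides in round $r$ if it decides at this step with $r_i=r$. Broadcast: let $\mathit{values}_i$ be the set of $v\in\{0,1\}$ such that $\mathsf{is\_valid}(r_i,v,S)$ holds for some $S\subseteq\mathit{aux\_values}_i$; let $bv=(r_i+1)\bmod 2$; if $p_i$ received from $p_{r_i\bmod n}$ a message $(\langle\mathrm{AUX}[r_i](p)\rangle_{r_i\bmod n},\cdot)$ with $p\in\mathit{values}_i$ then $est_i:=p$, else if $bv\in\mathit{values}_i$ then $est_i:=bv$, else $est_i:=\neg bv$; choose $\mathit{proofs}\subseteq\mathit{aux\_values}_i$ with $\mathsf{is\_valid}(r_i,est_i,\mathit{proofs})$ and broadcast $(\langle\mathrm{AUX}[r_i](est_i)\rangle_i,\mathit{proofs})$. On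 receiving $(\langle\mathrm{AUX}[r_j](est_j)\rangle_j,\mathit{proofs})$: if $\mathsf{is\_valid}(r_j,est_j,\mathit{proofs})$, add the signed message and the messages of $\mathit{proofs}$ needed to satisfy the predicate to $\mathit{aux\_values}_i$ (such messages are called valid). Then let $\rho_i$ be the largest round for which $\mathit{aux\_values}_i$ contains messages from $t+1$ different processes, and set every timer with index $\le 2\rho_i$ to expired. *)

(* Defs.v *)
From mathcomp Require Import all_boot.
Set Implicit Arguments. Unset Strict Implicit. Unset Printing Implicit Defensive.

Section Model.
Variables (n t : nat) (F : {set 'I_n}) (prop : 'I_n -> bool).
(* Process p_k is represented by i : 'I_n with k = i.+1 (indices 1..n).
   F is the set of Byzantine processes; prop i is the proposal of i.
   Binary values 0/1 are represented by false/true. *)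

(* signed message <AUX[r](v)>_j  represented as (r, v, j) *)
Definition sm := (nat * bool * 'I_n)%type.

Definition nb_from (S : seq sm) (r : nat) (v : bool) : nat :=
  #|[set j : 'I_n | (r, v, j) \in S]|.

Definition nb_round (S : seq sm) (r : nat) : nat :=
  #|[set j : 'I_n | ((r, false, j) \in S) || ((r, true, j) \in S)]|.

Definition is_valid (r : nat) (est : bool) (proofs : seq sm) : bool :=
  if r == 0 then true
  else if r == 1 then t.+1 <= nb_from proofs 0 est
  else let b := odd (r - 1) in
    if est == b then
      ((r == 2) && (t.+1 <= nb_from proofs 0 b)) || (n - t <= nb_from proofs (r - 2) b)
    else n - t <= nb_from proofs (r - 1) (~~ b).

Definition is_coord (i : 'I_n) (r : nat) : bool := (i.+1 == r %% n).

Inductive tstate := TNotStarted | TRunning | TExpired.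

(* program counter of the main loop:
   PInit  : before the initial broadcast of AUX[0](v_i)
   PBegin : about to execute steps (1)-(3 start)
   PWaitT0: waiting for timer 2r (step 3), then step (4)
   PWaitQ : step (5)
   PWaitT1: waiting for timer 2r+1 (step 6), then step (7) *)
Inductive phase := PInit | PBegin | PWaitT0 | PWaitQ | PWaitT1.

Record pstate := PState {
  rnd : nat;
  ph : phase;
  aux : seq sm;
  timers : nat -> tstate;
  recvd : seq ('I_n * sm);           (* (channel sender, signed message) of every received message *)
  decided : option bool }.

Record packet := Packet { src : 'I_n; dst : 'I_n; psig : sm; pproofs : seq sm }.

Record world := World {
  procs : 'I_n -> pstate;
  net : seq packet;
  signed : seq sm }.                 (* signatures produced by non-faulty processes *)

Definition upd (f : 'I_n -> pstate) (i : 'I_n) (s : pstate) : 'I_n -> pstate :=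
  fun j => if j == i then s else f j.

Definition start_timer (tm : nat -> tstate) (k : nat) : nat -> tstate :=
  fun k' => if k' == k then (if tm k is TNotStarted then TRunning else tm k) else tm k'.

Definition expire (A : seq sm) (tm : nat -> tstate) : nat -> tstate :=
  fun k => if has (fun x : sm => (t.+1 <= nb_round A x.1.1) && (k <= 2 * x.1.1)) A
           then TExpired else tm k.

Definition bcast_pkts (i : 'I_n) (s : sm) (proofs : seq sm) : seq packet :=
  [seq Packet i j s proofs | j <- enum 'I_n].

Definition in_values (A : seq sm) (r : nat) (v : bool) : Prop :=
  exists S : seq sm, {subset S <= A} /\ is_valid r v S.

Definition coord_proposes (st : pstate) (r : nat) (p : bool) : Prop :=
  exists c : 'I_n, is_coord c r /\ (c, (r, p, c)) \in recvd st /\ in_values (aux st) r p.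

Definition bcast_choice (st : pstate) (r : nat) (est : bool) (proofs : seq sm) : Prop :=
  let bv := odd r.+1 in
  (coord_proposes st r est \/
   ((~ exists p, coord_proposes st r p) /\
    ((in_values (aux st) r bv /\ est = bv) \/ (~ in_values (aux st) r bv /\ est = ~~ bv))))
  /\ {subset proofs <= aux st} /\ is_valid r est proofs.

Inductive step : world -> world -> Prop :=
| st_init w i st :
    i \notin F -> procs w i = st -> ph st = PInit ->
    step w (World (upd (procs w) i
                 (PState 0 PBegin (aux st) (timers st) (recvd st) (decided st)))
             (net w ++ bcast_pkts i (0, prop i, i) [::])
             ((0, prop i, i) :: signed w))
| st_begin_coord w i st est proofs :
    i \notin F -> procs w i = st -> ph st = PBegin -> is_coord i (rnd st).+1 ->
    bcast_choice st (rnd st).+1 est proofs ->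
    step w (World (upd (procs w) i
                 (PState (rnd st).+1 PWaitT0 (aux st)
                    (start_timer (timers st) (2 * (rnd st).+1)) (recvd st) (decided st)))
             (net w ++ bcast_pkts i ((rnd st).+1, est, i) proofs)
             (((rnd st).+1, est, i) :: signed w))
| st_begin_other w i st :
    i \notin F -> procs w i = st -> ph st = PBegin -> ~~ is_coord i (rnd st).+1 ->
    step w (World (upd (procs w) i
                 (PState (rnd st).+1 PWaitT0 (aux st)
                    (start_timer (timers st) (2 * (rnd st).+1)) (recvd st) (decided st)))
             (net w) (signed w))
| st_t0_coord w i st :
    i \notin F -> procs w i = st -> ph st = PWaitT0 -> timers st (2 * rnd st) = TExpired ->
    is_coord i (rnd st) ->
    step w (World (upd (procs w) i
                 (PState (rnd st) PWaitQ (aux st) (timers st) (recvd st) (decided st)))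
             (net w) (signed w))
| st_t0_other w i st est proofs :
    i \notin F -> procs w i = st -> ph st = PWaitT0 -> timers st (2 * rnd st) = TExpired ->
    ~~ is_coord i (rnd st) ->
    bcast_choice st (rnd st) est proofs ->
    step w (World (upd (procs w) i
                 (PState (rnd st) PWaitQ (aux st) (timers st) (recvd st) (decided st)))
             (net w ++ bcast_pkts i (rnd st, est, i) proofs)
             ((rnd st, est, i) :: signed w))
| st_quorum w i st :
    i \notin F -> procs w i = st -> ph st = PWaitQ -> n - t <= nb_round (aux st) (rnd st) ->
    step w (World (upd (procs w) i
                 (PState (rnd st) PWaitT1 (aux st)
                    (start_timer (timers st) (2 * rnd st).+1) (recvd st) (decided st)))
             (net w) (signed w))
| st_t1 w i st :
    i \notin F -> procs w i = st -> ph st = PWaitT1 -> timers st (2 * rnd st).+1 = TExpired ->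
    let b := odd (rnd st) in
    let d := if decided st is Some _ then decided st
             else if n - t <= nb_from (aux st) (rnd st) b then Some b else None in
    step w (World (upd (procs w) i
                 (PState (rnd st) PBegin (aux st) (timers st) (recvd st) d))
             (net w) (signed w))
(* a running timer expires (timer durations are arbitrary) *)
| st_timer w i st k :
    procs w i = st -> timers st k = TRunning ->
    step w (World (upd (procs w) i
                 (PState (rnd st) (ph st) (aux st)
                    (fun k' => if k' == k then TExpired else timers st k')
                    (recvd st) (decided st)))
             (net w) (signed w))
| st_deliver_valid w n1 n2 p st S :
    net w = n1 ++ p :: n2 -> dst p \notin F -> procs w (dst p) = st ->
    is_valid (psig p).1.1 (psig p).1.2 (pproofs p) ->
    {subset S <= pproofs p} -> is_valid (psig p).1.1 (psig p).1.2 S ->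
    let A := psig p :: S ++ aux st in
    step w (World (upd (procs w) (dst p)
                 (PState (rnd st) (ph st) A (expire A (timers st))
                    ((src p, psig p) :: recvd st) (decided st)))
             (n1 ++ n2) (signed w))
| st_deliver_invalid w n1 n2 p st :
    net w = n1 ++ p :: n2 -> dst p \notin F -> procs w (dst p) = st ->
    ~~ is_valid (psig p).1.1 (psig p).1.2 (pproofs p) ->
    step w (World (upd (procs w) (dst p)
                 (PState (rnd st) (ph st) (aux st) (expire (aux st) (timers st))
                    ((src p, psig p) :: recvd st) (decided st)))
             (n1 ++ n2) (signed w))
| st_deliver_faulty w n1 n2 p :
    net w = n1 ++ p :: n2 -> dst p \in F ->
    step w (World (procs w) (n1 ++ n2) (signed w))
(* a Byzantine process sends an arbitrary message; it cannot forge
   signatures of non-faulty processes *)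
| st_byz w k d s proofs :
    k \in F ->
    (forall x, x \in s :: proofs -> x.2 \in F \/ x \in signed w) ->
    step w (World (procs w) (net w ++ [:: Packet k d s proofs]) (signed w)).

Definition init_world : world :=
  World (fun _ => PState 0 PInit [::] (fun _ => TNotStarted) [::] None) [::] [::].

Inductive reachable : world -> Prop :=
| reach_init : reachable init_world
| reach_step w w' : reachable w -> step w w' -> reachable w'.

End Model.

(* Main.v *)
Require Import Defs.
From mathcomp Require Import all_boot.
From mathcomp Require Import zify.
Set Implicit Arguments. Unset Strict Implicit. Unset Printing Implicit Defensive.

Section Proof.
Variables (n t : nat) (F : {set 'I_n}) (prop : 'I_n -> bool).
Hypothesis Hn : 3 * t < n.
Hypothesis HF : #|F| <= t.

Definition cert (w : world n) (x : sm n) : bool := (x.2 \in F) || (x \in signed w).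
Definition CC (w : world n) r v : {set 'I_n} := [set j | (j \in F) || ((r, v, j) \in signed w)].

Definition sig_ok (w : world n) : Prop :=
  forall j k v, j \notin F -> (k, v, j) \in signed w ->
    ph (procs w j) <> PInit /\ k <= rnd (procs w j) /\
    ~ (ph (procs w j) = PWaitT0 /\ ~~ is_coord j (rnd (procs w j)) /\ k = rnd (procs w j)).

Record Inv (w : world n) : Prop := {
  i_aux : forall i x, x \in aux (procs w i) -> cert w x;
  i_net : forall p, List.In p (net w) -> cert w (psig p) /\ (forall x, x \in pproofs p -> cert w x);
  i_sig : sig_ok w;
  i_uniq : forall j k v v', j \notin F -> (k, v, j) \in signed w -> (k, v', j) \in signed w -> v = v';
  i_valid : forall j k v, j \notin F -> (k, v, j) \in signed w -> 0 < k ->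
     exists pr, is_valid t k v pr /\ (forall x, x \in pr -> cert w x);
  i_rnd : forall i, ph (procs w i) <> PInit -> ph (procs w i) <> PBegin -> 0 < rnd (procs w i);
  i_dec : forall i a, decided (procs w i) = Some a ->
     exists r, 0 < r /\ a = odd r /\ n - t <= #|CC w r a| }.

Lemma nb_from_le w (S : seq (sm n)) r v : (forall x, x \in S -> cert w x) ->
  nb_from S r v <= #|CC w r v|.
Proof.
move=> HS; apply: subset_leq_card; apply/subsetP => j; rewrite !inE => Hj.
by have := HS _ Hj; rewrite /cert /=.
Qed.

Lemma no_opp w (I : Inv w) r1 a : 0 < r1 -> a = odd r1 -> n - t <= #|CC w r1 a| ->
  forall k, r1 <= k -> #|CC w k (~~ a)| < n - t.
Proof.
move=> r1p ea Hc k; elim/ltn_ind: k => k IH Hk.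
case: (ltngtP r1 k) Hk => // [lt1 _ | <- _].
- have sub : CC w k (~~ a) \subset F.
    apply/subsetP => j; rewrite inE; case/orP => // Hs; apply/negPn/negP => jF.
    have k0 : 0 < k by lia.
    have [pr [Hv Hpr]] := i_valid I jF Hs k0.
    move: Hv; rewrite /is_valid.
    have -> : (k == 0) = false by apply/negbTE; lia.
    have -> : (k == 1) = false by apply/negbTE; lia.
    case: eqP => Hb.
    + case/orP.
      * case/andP => /eqP k2 _; subst k; rewrite ea in Hb.
        have r11 : r1 = 1 by lia.
        by subst r1.
      * move=> Hle; have := @nb_from_le w pr (k - 2) (odd (k - 1)) Hpr.
        rewrite -Hb => Hle2.
        have lt2 : k - 2 < k by lia.
        have le2 : r1 <= k - 2.
          move: Hb; rewrite ea => Hb.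
          have : r1 != k - 1 by apply/eqP => E; move: Hb; rewrite -E; case: (odd r1).
          lia.
        have := IH _ lt2 le2; move: Hle Hle2; rewrite -Hb; lia.
    + move=> Hle; move: Hle; have := @nb_from_le w pr (k - 1) (~~ odd (k - 1)) Hpr.
      have -> : ~~ odd (k - 1) = ~~ a.
        by case: a Hb {IH Hc ea Hs}; case: (odd (k - 1)).
      have lt2 : k - 1 < k by lia.
      have le2 : r1 <= k - 1 by lia.
      move=> Hle Hle2; have := IH _ lt2 le2; lia.
  have := subset_leq_card sub; lia.
- rewrite ltnNge; apply/negP => Hc2.
  have HU := cardsUI (CC w r1 a) (CC w r1 (~~ a)).
  have HUn : #|CC w r1 a :|: CC w r1 (~~ a)| <= n by rewrite -[X in _ <= X]card_ord max_card.
  have : ~~ (CC w r1 a :&: CC w r1 (~~ a) \subset F).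
    apply/negP => sub; have := subset_leq_card sub; lia.
  case/subsetPn => j; rewrite !inE => /andP [H1 H2] jF.
  rewrite (negbTE jF) /= in H1 H2.
  have := i_uniq I jF H1 H2; by case: (a).
Qed.

Lemma agree w (I : Inv w) i j a b : decided (procs w i) = Some a -> decided (procs w j) = Some b -> a = b.
Proof.
move=> Ha Hb.
have [r1 [p1 [e1 c1]]] := i_dec I Ha.
have [r2 [p2 [e2 c2]]] := i_dec I Hb.
clear Ha Hb; wlog le : r1 r2 a b p1 p2 e1 e2 c1 c2 / r1 <= r2.
  move=> H; case: (leqP r1 r2) => h; first exact: (H r1 r2).
  symmetry; apply: (H r2 r1) => //; exact: ltnW.
move: le; rewrite leq_eqVlt => /orP [/eqP E | lt]; first by subst r2; rewrite e1 e2.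
apply/eqP/negP => neq.
have eb : b = ~~ a by move: neq; case: (a); case: (b).
have := no_opp I p1 e1 c1 (ltnW lt); rewrite -eb; lia.
Qed.
End Proof.

Section P2.
Variables (n t : nat) (F : {set 'I_n}) (prop : 'I_n -> bool).

Notation cert := (cert F).
Notation CC := (CC F).
Notation Inv := (Inv t F).

Lemma cert_mono (w w' : world n) x : {subset signed w <= signed w'} -> cert w x -> cert w' x.
Proof. by move=> s; rewrite /cert; case/orP => [->//|/s ->]; rewrite orbT. Qed.

Lemma CC_mono (w w' : world n) r a : {subset signed w <= signed w'} -> #|CC w r a| <= #|CC w' r a|.
Proof.
move=> s; apply: subset_leq_card; apply/subsetP => j; rewrite !inE.
by case/orP => [->//|/s ->]; rewrite orbT.
Qed.

Lemma in_bcast i (s : sm n) pr p : List.In p (bcast_pkts i s pr) -> psig p = s /\ pproofs p = pr.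
Proof. rewrite /bcast_pkts; elim: (enum 'I_n) => //= j l IH [<-|/IH] //. Qed.

Lemma init_inv : Inv (init_world n).
Proof.
split => //=.
Qed.


Definition sigok_at (w : world n) (i : 'I_n) (s' : pstate n) k :=
  ph s' <> PInit /\ k <= rnd s' /\ ~ (ph s' = PWaitT0 /\ ~~ is_coord i (rnd s') /\ k = rnd s').

Lemma frame (w : world n) i s' N :
  Inv w ->
  (forall x, x \in aux s' -> cert w x) ->
  (forall p, List.In p N -> cert w (psig p) /\ (forall x, x \in pproofs p -> cert w x)) ->
  (forall k v, i \notin F -> (k, v, i) \in signed w -> sigok_at w i s' k) ->
  (ph s' <> PInit -> ph s' <> PBegin -> 0 < rnd s') ->
  (forall a, decided s' = Some a -> exists r, 0 < r /\ a = odd r /\ n - t <= #|CC w r a|) ->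
  Inv (World (upd (procs w) i s') N (signed w)).
Proof.
move=> [Ia In Is Iu Iv Ir Id] Ha HN Hs Hr Hd; split => //=.
- by move=> j x; rewrite /upd /=; case: ifP => _; [apply: Ha | apply: Ia].
- move=> j k v jF /=; rewrite /upd; case: ifP => [/eqP E|_]; [subst j; exact: Hs | exact: Is].
- by move=> j; rewrite /upd /=; case: ifP => _; [apply: Hr | apply: Ir].
- by move=> j a; rewrite /upd /=; case: ifP => _; [exact: (Hd a) | exact: (Id j a)].
Qed.

Lemma frame_net (w : world n) N :
  Inv w ->
  (forall p, List.In p N -> cert w (psig p) /\ (forall x, x \in pproofs p -> cert w x)) ->
  Inv (World (procs w) N (signed w)).
Proof. by move=> [Ia In Is Iu Iv Ir Id] HN; split. Qed.

Lemma sign_frame (w : world n) i s' (m : sm n) pr :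
  Inv w -> m.2 = i -> i \notin F ->
  (forall x, x \in aux s' -> cert w x) ->
  (forall x, x \in pr -> cert w x) ->
  (0 < m.1.1 -> is_valid t m.1.1 m.1.2 pr) ->
  (forall v, (m.1.1, v, i) \notin signed w) ->
  (forall k v, (k, v, i) \in m :: signed w -> sigok_at w i s' k) ->
  (ph s' <> PInit -> ph s' <> PBegin -> 0 < rnd s') ->
  (forall a, decided s' = Some a -> exists r, 0 < r /\ a = odd r /\ n - t <= #|CC w r a|) ->
  Inv (World (upd (procs w) i s') (net w ++ bcast_pkts i m pr) (m :: signed w)).
Proof.
move=> [Ia In Is Iu Iv Ir Id] m2 iF Ha Hpr Hv Hnot Hs Hr Hd.
have sub : {subset signed w <= signed (World (upd (procs w) i s') (net w ++ bcast_pkts i m pr) (m :: signed w))} by move=> x xs; rewrite in_cons xs orbT.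
split => /=.
- move=> j x; rewrite /upd /=; case: ifP => _ xa; apply: (cert_mono sub); [exact: Ha | exact: Ia xa].
- move=> p /List.in_app_iff [/In [c1 c2]| /in_bcast [-> ->]].
    by split; [exact: cert_mono sub c1 | move=> x /c2; exact: cert_mono sub].
  split; first by rewrite /cert mem_head orbT.
  by move=> x /Hpr; apply: cert_mono.
- move=> j k v jF kin; rewrite /upd /=; case: ifP => [/eqP E|ne].
    by subst j; exact: Hs kin.
  move: kin => /=; rewrite in_cons => /orP [/eqP E|kin]; last exact: (Is j k v jF kin).
  by subst m; rewrite /= in m2; rewrite m2 eqxx in ne.
- move=> j k v v' jF /=; rewrite !in_cons.
  case: m m2 Hv Hnot {Hs sub} => [[k0 v0] j0] /= m2 Hv Hnot; subst j0.
  move=> /orP [/eqP [e1 e2 e3] | h1] /orP [/eqP [e1' e2' e3'] | h2].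
  + by subst.
  + by subst; move: (Hnot v'); rewrite h2.
  + by subst; move: (Hnot v); rewrite h1.
  + exact: Iu jF h1 h2.
- move=> j k v jF; rewrite in_cons => /orP [/eqP E|kin] kp.
    subst m; exists pr; split; first exact: Hv.
    by move=> x /Hpr; apply: cert_mono.
  have [pr' [h1 h2]] := Iv _ _ _ jF kin kp; exists pr'; split => // x /h2; exact: cert_mono.
- by move=> j; rewrite /upd /=; case: ifP => _; [apply: Hr | apply: Ir].
- move=> j a; rewrite /upd /=; case: ifP => _ H.
    have [r [r0 [ar c]]] := Hd _ H; exists r; do 2!split => //.
    by apply: leq_trans c _; apply: CC_mono.
  have [r [r0 [ar c]]] := Id _ _ H; exists r; do 2!split => //.
  by apply: leq_trans c _; apply: CC_mono.
Qed.

End P2.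

Section P3.
Variables (n t : nat) (F : {set 'I_n}) (prop : 'I_n -> bool).

Notation cert := (cert F).
Notation CC := (CC F).
Notation Inv := (Inv t F).

Lemma sig_same (w : world n) (i : 'I_n) (s' : pstate n) : Inv w -> ph s' = ph (procs w i) -> rnd s' = rnd (procs w i) ->
  forall k v, i \notin F -> (k, v, i) \in signed w -> sigok_at w i s' k.
Proof. by move=> I e1 e2 k v iF kin; rewrite /sigok_at e1 e2; exact: (i_sig I iF kin). Qed.

Lemma dec_same (w : world n) (i : 'I_n) (s' : pstate n) : Inv w -> decided s' = decided (procs w i) ->
  forall a, decided s' = Some a -> exists r, 0 < r /\ a = odd r /\ n - t <= #|CC w r a|.
Proof. by move=> I e a; rewrite e; exact: (i_dec I). Qed.

Lemma rnd_same (w : world n) (i : 'I_n) (s' : pstate n) : Inv w -> ph s' = ph (procs w i) -> rnd s' = rnd (procs w i) ->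
  ph s' <> PInit -> ph s' <> PBegin -> 0 < rnd s'.
Proof. by move=> I e1 e2; rewrite e1 e2; exact: (i_rnd I). Qed.

Lemma aux_same (w : world n) (i : 'I_n) (s' : pstate n) : Inv w -> aux s' = aux (procs w i) ->
  forall x, x \in aux s' -> cert w x.
Proof. by move=> I e x; rewrite e; exact: (i_aux I). Qed.

Lemma net_same (w : world n) : Inv w -> forall p, List.In p (net w) ->
   cert w (psig p) /\ (forall x, x \in pproofs p -> cert w x).
Proof. by move=> I; exact: (i_net I). Qed.

Lemma inv_step (w w' : world n) : step t F prop w w' -> Inv w -> Inv w'.
Proof.
case => {w w'}.
-
  move=> w i st iF Hst Hph I.
  have none : forall k v, (k, v, i) \notin signed w.
    move=> k v; apply/negP => kin; have [h _] := i_sig I iF kin; by rewrite Hst in h.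
  apply: sign_frame => //=.
  + by move=> x; rewrite -?Hst; exact: (i_aux I).
  + move=> k v; rewrite in_cons => /orP [/eqP [-> _] | kin]; last by rewrite (negbTE (none _ _)) in kin.
    by rewrite /sigok_at /=; split => //; split => //; case.
  + by move=> a; rewrite -Hst; exact: (i_dec I).
-
  move=> w i st est proofs iF Hst Hph Hc [_ [Hsub Hval]] I.
  apply: sign_frame => //=.
  + by move=> x; rewrite -?Hst; exact: (i_aux I).
  + by move=> x /Hsub; rewrite -Hst; exact: (i_aux I).
  + move=> v; apply/negP => kin; have [_ [h _]] := i_sig I iF kin; move: h; rewrite Hst; lia.
  + move=> k v; rewrite in_cons => /orP [/eqP [-> _] | kin].
      by rewrite /sigok_at /=; split => //; split => //; case=> _ []; rewrite Hc.
    have [_ [h _]] := i_sig I iF kin; move: h; rewrite Hst => h.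
    rewrite /sigok_at /=; split => //; split; first lia; by case=> _ []; rewrite Hc.
  + by move=> a; rewrite -Hst; exact: (i_dec I).
-
  move=> w i st iF Hst Hph Hc I.
  apply: frame => //=.
  + by move=> x; rewrite -?Hst; exact: (i_aux I).
  + exact: net_same.
  + move=> k v _ kin; have [_ [h _]] := i_sig I iF kin; move: h; rewrite Hst => h.
    rewrite /sigok_at /=; split => //; split; first lia; case=> _ [_]; lia.
  + by move=> a; rewrite -Hst; exact: (i_dec I).
-
  move=> w i st iF Hst Hph Htm Hc I.
  apply: frame => //=.
  + by move=> x; rewrite -?Hst; exact: (i_aux I).
  + exact: net_same.
  + move=> k v _ kin; have [_ [h _]] := i_sig I iF kin; move: h; rewrite Hst => h.
    by rewrite /sigok_at /=; split => //; split => //; case.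
  + move=> _ _; have := i_rnd I (i := i); rewrite Hst Hph; apply => //.
  + by move=> a; rewrite -Hst; exact: (i_dec I).
-
  move=> w i st est proofs iF Hst Hph Htm Hc [_ [Hsub Hval]] I.
  apply: sign_frame => //=.
  + by move=> x; rewrite -?Hst; exact: (i_aux I).
  + by move=> x /Hsub; rewrite -Hst; exact: (i_aux I).
  + move=> v; apply/negP => kin; have [_ [_ h]] := i_sig I iF kin; apply: h; rewrite Hst.
    by split => //; split.
  + move=> k v; rewrite in_cons => /orP [/eqP [-> _] | kin].
      by rewrite /sigok_at /=; split => //; split => //; case.
    have [_ [h _]] := i_sig I iF kin; move: h; rewrite Hst => h.
    by rewrite /sigok_at /=; split => //; split => //; case.
  + move=> _ _; have := i_rnd I (i := i); rewrite Hst Hph; apply => //.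
  + by move=> a; rewrite -Hst; exact: (i_dec I).
-
  move=> w i st iF Hst Hph Hq I.
  apply: frame => //=.
  + by move=> x; rewrite -?Hst; exact: (i_aux I).
  + exact: net_same.
  + move=> k v _ kin; have [_ [h _]] := i_sig I iF kin; move: h; rewrite Hst => h.
    by rewrite /sigok_at /=; split => //; split => //; case.
  + move=> _ _; have := i_rnd I (i := i); rewrite Hst Hph; apply => //.
  + by move=> a; rewrite -Hst; exact: (i_dec I).
-
  move=> w i st iF Hst Hph Htm b d I; rewrite {}/d {}/b.
  apply: frame => //=.
  + by move=> x; rewrite -?Hst; exact: (i_aux I).
  + exact: net_same.
  + move=> k v _ kin; have [_ [h _]] := i_sig I iF kin; move: h; rewrite Hst => h.
    by rewrite /sigok_at /=; split => //; split => //; case.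
  + case E: (decided st) => [a'|].
      by move=> a [<-]; have := i_dec I (i := i); rewrite Hst; apply.
    case: ifP => // Hle a [<-]; exists (rnd st); split.
      by have := i_rnd I (i := i); rewrite Hst Hph; apply.
    split => //; apply: leq_trans Hle _; apply: nb_from_le => x xa.
    by have := i_aux I (i := i); rewrite Hst; apply.
-
  move=> w i st k Hst Htm I.
  apply: frame => //=.
  + by move=> x; rewrite -?Hst; exact: (i_aux I).
  + exact: net_same.
  + by move=> k0 v0 iF0 kin; rewrite /sigok_at /= -Hst; exact: (i_sig I iF0 kin).
  + by rewrite /= -Hst; exact: (i_rnd I).
  + by move=> a; rewrite -Hst; exact: (i_dec I).
-
  move=> w n1 n2 p st S Hnet dF Hst Hv Hsub HvS A I; rewrite {}/A.
  have pin : List.In p (net w) by rewrite Hnet; apply/List.in_app_iff; right; left.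
  have [cp cpp] := i_net I pin.
  apply: frame => //=.
  + move=> x; rewrite in_cons mem_cat => /orP [/eqP -> // | /orP [/Hsub /cpp // | xa]].
    by have := i_aux I (i := dst p); rewrite Hst; apply.
  + move=> q qin; apply: (i_net I); rewrite Hnet; apply/List.in_app_iff.
    case/List.in_app_iff: qin => [h|h]; [by left | by right; right].
  + by move=> k0 v0 iF0 kin; rewrite /sigok_at /= -Hst; exact: (i_sig I iF0 kin).
  + by rewrite /= -Hst; exact: (i_rnd I).
  + by move=> a; rewrite -Hst; exact: (i_dec I).
-
  move=> w n1 n2 p st Hnet dF Hst Hv I.
  apply: frame => //=.
  + by move=> x; rewrite -?Hst; exact: (i_aux I).
  + move=> q qin; apply: (i_net I); rewrite Hnet; apply/List.in_app_iff.
    case/List.in_app_iff: qin => [h|h]; [by left | by right; right].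
  + by move=> k0 v0 iF0 kin; rewrite /sigok_at /= -Hst; exact: (i_sig I iF0 kin).
  + by rewrite /= -Hst; exact: (i_rnd I).
  + by move=> a; rewrite -Hst; exact: (i_dec I).
-
  move=> w n1 n2 p Hnet dF I.
  apply: frame_net => // q qin; apply: (i_net I); rewrite Hnet; apply/List.in_app_iff.
  case/List.in_app_iff: qin => [h|h]; [by left | by right; right].
-
  move=> w k d s proofs kF Hc I.
  apply: frame_net => // q /List.in_app_iff [/(i_net I) // | [<- | //]] /=.
  have cx : forall x, x \in s :: proofs -> cert w x.
    by move=> x /Hc [h|h]; rewrite /cert h ?orbT.
  split; first by apply: cx; rewrite mem_head.
  by move=> x xp; apply: cx; rewrite in_cons xp orbT.
Qed.

End P3.

Theorem lemma3 (n t : nat) (F : {set 'I_n}) (prop : 'I_n -> bool) :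
  3 * t < n -> #|F| <= t ->
  forall w : world n,
    reachable t F prop w ->
    forall (i j : 'I_n) (a b : bool),
      i \notin F -> j \notin F ->
      decided (procs w i) = Some a -> decided (procs w j) = Some b ->
      a = b.
Proof.
move=> Hn HF w R i j a b _ _ Ha Hb.
have I : Inv t F w.
  elim: R => [|w0 w1 _ IH S]; first exact: init_inv.
  exact: inv_step S IH.
exact: (agree Hn HF I Ha Hb).
Qed.
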